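(* Let $(\mathfrak{A},\mathfrak{A}_0)$ be a *-semisimple CQ*-algebra with unit $I$ as in the context, let $X\in\mathfrak{A}$, and suppose $\alpha\in\mathbb{C}$ is a generalized eigenvalue of $X$. Then $X-\alpha I$ has no generalized left inverse.
   Context: Let $\mathfrak{A}_0$ be a unital C*-algebra with C*-norm $\|\cdot\|_0$ and unit $I$, and $\|\cdot\|$ another norm on $\mathfrak{A}_0$ with $\|A\|\le\|A\|_0$, $\|AB\|\le\|A\|\,\|B\|_0$, $\|A^*\|=\|A\|$. $\mathfrak{A}$ is the $\|\cdot\|$-completion of $\mathfrak{A}_0$, with $XA,AX,X^*$ ($X\in\mathfrak{A},A\in\mathfrak{A}_0$) defined as $\|\cdot\|$-limits of $A_nA$, $AA_n$, $A_n^*$ for $A_n\in\mathfrak{A}_0$, $A_n\to X$. $\mathcal{P}_{\mathfrak{A}_0}(\mathfrak{A})$ is the set of sesquilinear forms $\varphi$ on $\mathfrak{A}\times\mathfrak{A}$ with $\varphi(X,X)\ge0$, $\varphi(XA,B)=\varphi(A,X^*B)$ for $X\in\mathfrak{A}$, $A,B\in\mathfrak{A}_0$, and $|\varphi(X,Y)|\le\gamma\|X\|\|Y\|$ for some $\gamma>0$; $\mathcal{S}_{\mathfrak{A}_0}(\mathfrak{A})$ is the subset with $\gamma\le1$. *-semisimple: for every $X\ne0$ there is $\varphi\in\mathcal{S}_{\mathfrak{A}_0}(\mathfrak{A})$ with $\varphi(X,X)>0$. $Z\in\mathfrak{A}$ has a generalized left inverse if there exists $Y\in\mathfrak{A}$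 with $\varphi(ZA,Y^*B)=\varphi(A,B)$ for all $\varphi\in\mathcal{S}_{\mathfrak{A}_0}(\mathfrak{A})$ and all $A,B\in\mathfrak{A}_0$. A complex number $\alpha$ is a generalized eigenvalue of $X$ if there exist a nonzero $\varphi\in\mathcal{P}_{\mathfrak{A}_0}(\mathfrak{A})$ and $A\in\mathfrak{A}_0$ with $\varphi(A,A)>0$ and $\varphi(XA-\alpha A,B)=0$ for all $B\in\mathfrak{A}_0$. *)

(* Defs.v *)
From HB Require Import structures.
From mathcomp Require Import all_boot all_order all_algebra.
From mathcomp Require Import all_classical all_reals all_analysis.
From mathcomp Require Import complex.
Set Implicit Arguments. Unset Strict Implicit. Unset Printing Implicit Defensive.
Import Order.TTheory GRing.Theory Num.Theory.
Import numFieldNormedType.Exports.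
Local Open Scope ring_scope.
Local Open Scope classical_set_scope.

(* A0 : Banach space over C carrying the C*-norm ||.||_0 (its own norm);
   A  : Banach space over C (complete: this is the ||.||-completion);
   j  : the (linear, dense) embedding A0 -> A, the second norm on A0 being
        ||a|| := ||j a||_A. *)
Record CQ_data (R : realType) (A0 A : completeNormedModType R[i]) := CQData {
  mul0 : A0 -> A0 -> A0;
  one0 : A0;
  star0 : A0 -> A0;
  emb : A0 -> A;
  rmul : A -> A0 -> A;
  lmul : A0 -> A -> A;
  starA : A -> A
}.

Section Defs.
Variables (R : realType) (A0 A : completeNormedModType R[i]).
Variable S : CQ_data A0 A.

Local Notation m := (mul0 S).
Local Notation j := (emb S).

Definition is_unital_Cstar_algebra : Prop :=
  (forall a b c, m (m a b) c = m a (m b c)) /\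
      (forall a, m (one0 S) a = a /\ m a (one0 S) = a) /\
      (forall (k : R[i]) a b c, m (k *: a + b) c = k *: m a c + m b c) /\
      (forall (k : R[i]) a b c, m c (k *: a + b) = k *: m c a + m c b) /\
      (forall a b, `|m a b| <= `|a| * `|b|) /\
      (forall (k : R[i]) a b, star0 S (k *: a + b) = (k^*) *: star0 S a + star0 S b) /\
      (forall a, star0 S (star0 S a) = a) /\
      (forall a b, star0 S (m a b) = m (star0 S b) (star0 S a)) /\
      (forall a, `|m (star0 S a) a| = `|a| ^+ 2).

Definition is_CQstar_algebra : Prop :=
  is_unital_Cstar_algebra /\
      (forall (k : R[i]) a b, j (k *: a + b) = k *: j a + j b) /\
      injective j /\
      (forall X (e : R[i]), 0 < e -> exists a, `|X - j a| < e) /\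
      (forall a, `|j a| <= `|a|) /\
      (forall a b, `|j (m a b)| <= `|j a| * `|b|) /\
      (forall a, `|j (star0 S a)| = `|j a|) /\
      (forall (u : nat -> A0) X, (fun n => j (u n)) @ \oo --> X ->
         [/\ forall b, (fun n => j (m (u n) b)) @ \oo --> rmul S X b,
             forall b, (fun n => j (m b (u n))) @ \oo --> lmul S b X &
             (fun n => j (star0 S (u n))) @ \oo --> starA S X]).

Definition sesquilinear (phi : A -> A -> R[i]) : Prop :=
  (forall (k : R[i]) X Y Z, phi (k *: X + Y) Z = k * phi X Z + phi Y Z) /\
  (forall (k : R[i]) X Y Z, phi Z (k *: X + Y) = (k^*) * phi Z X + phi Z Y).

Definition P_A0 (phi : A -> A -> R[i]) : Prop :=
  [/\ sesquilinear phi,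
      (forall X, 0 <= phi X X),
      (forall X a b, phi (rmul S X a) (j b) = phi (j a) (rmul S (starA S X) b)) &
      exists gamma : R[i], 0 < gamma /\
        forall X Y, `|phi X Y| <= gamma * `|X| * `|Y| ].

Definition S_A0 (phi : A -> A -> R[i]) : Prop :=
  [/\ sesquilinear phi,
      (forall X, 0 <= phi X X),
      (forall X a b, phi (rmul S X a) (j b) = phi (j a) (rmul S (starA S X) b)) &
      exists gamma : R[i], [/\ 0 < gamma, gamma <= 1 &
        forall X Y, `|phi X Y| <= gamma * `|X| * `|Y| ] ].

Definition star_semisimple : Prop :=
  forall X : A, X != 0 -> exists phi, S_A0 phi /\ 0 < phi X X.

Definition has_gen_left_inverse (Z : A) : Prop :=
  exists Y : A, forall phi, S_A0 phi ->
    forall a b, phi (rmul S Z a) (rmul S (starA S Y) b) = phi (j a) (j b).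

Definition gen_eigenvalue (X : A) (alpha : R[i]) : Prop :=
  exists phi, [/\ P_A0 phi, phi <> (fun _ _ => 0) &
    exists a, 0 < phi (j a) (j a) /\
      forall b, phi (rmul S X a - alpha *: j a) (j b) = 0].

End Defs.

(* Main.v *)
Require Import Defs.
From mathcomp Require Import all_boot all_order all_algebra.
From mathcomp Require Import all_classical all_reals all_analysis.
From mathcomp Require Import complex.
Import Order.TTheory GRing.Theory Num.Theory.
Local Open Scope ring_scope.
Local Open Scope classical_set_scope.
Import numFieldNormedType.Exports.

Section Aux.
Variables (R : realType) (A0 A : completeNormedModType R[i]) (S : CQ_data A0 A).
Hypothesis HS : is_CQstar_algebra S.

Lemma approx_seq (X : A) : exists u : nat -> A0, (fun n => emb S (u n)) @ \oo --> X.
Proof.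
case: HS => _ [_ [_ [dens _]]].
have h : forall n : nat, exists a, `|X - emb S a| < (n.+1%:R : R[i])^-1.
  by move=> n; apply: dens; rewrite invr_gt0 ltr0n.
have [u hu] := boolp.choice h.
exists u; apply/cvgrPdist_lt => e e0.
rewrite ltcE in e0.
move: e0 => /andP[/eqP Ie Re0].
have eE : e = (complex.Re e)%:C%C by move: Ie; case: e {Re0} => x y /= ->.
near=> n. apply: lt_le_trans (hu n) _.
rewrite eE -(rmorph_nat (real_complex R) n.+1) -fmorphV lecR; apply: ltW.
near: n. exact: (near_infty_natSinv_lt (PosNum (Re0 : 0 < complex.Re e))).
Unshelve. all: by end_near.
Qed.

Lemma rmul_shift (X : A) (k : R[i]) (a : A0) :
  rmul S (k *: emb S (one0 S) + X) a = k *: emb S a + rmul S X a.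
Proof.
have [[_ [Hone [Hl _]]] [jl [_ [_ [_ [_ [_ Hcv]]]]]]] := HS.
have [u hu] := approx_seq X.
pose v n := k *: one0 S + u n.
have hv : (fun n => emb S (v n)) @ \oo --> k *: emb S (one0 S) + X.
  rewrite /v; under eq_fun do rewrite jl.
  exact: cvgD (cvg_cst _) hu.
have [h1 _ _] := Hcv v _ hv.
have [h2 _ _] := Hcv u _ hu.
have h3 : (fun n => emb S (mul0 S (v n) a)) @ \oo --> k *: emb S a + rmul S X a.
  rewrite /v; under eq_fun do rewrite Hl jl (proj1 (Hone a)).
  exact: cvgD (cvg_cst _) (h2 a).
exact: cvg_unique (h1 a) h3.
Qed.

Lemma phi_zero (phi : A -> A -> R[i]) (gamma : R[i]) (V : A) :
  sesquilinear phi -> 0 < gamma ->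
  (forall X Y, `|phi X Y| <= gamma * `|X| * `|Y|) ->
  (forall b, phi V (emb S b) = 0) -> forall W, phi V W = 0.
Proof.
move=> [_ s2] g0 hb hz W.
case: HS => _ [_ [_ [dens _]]].
have key : forall b, `|phi V W| <= gamma * `|V| * `|W - emb S b|.
  move=> b; have := hb V (W - emb S b).
  by rewrite addrC -scaleN1r s2 hz mulr0 add0r.
apply/eqP; rewrite -normr_eq0; apply/negPn/negP => hne.
have c0 : 0 < `|phi V W| by rewrite lt0r hne normr_ge0.
have V0 : 0 < `|V| + 1 by apply: (lt_le_trans ltr01); rewrite lerDr normr_ge0.
have d0 : 0 < gamma * (`|V| + 1) by rewrite mulr_gt0.
have [b hb'] := dens W _ (divr_gt0 c0 d0).
have := key b => k1.
have k2 : gamma * `|V| * `|W - emb S b| <= gamma * (`|V| + 1) * `|W - emb S b|.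
  apply: ler_wpM2r; first exact: normr_ge0.
  apply: ler_wpM2l; first exact: ltW.
  by rewrite lerDl ler01.
have k3 : gamma * (`|V| + 1) * `|W - emb S b| < gamma * (`|V| + 1) * (`|phi V W| / (gamma * (`|V| + 1))).
  by rewrite ltr_pM2l.
move: k3; rewrite [X in _ < X]mulrC divfK ?gt_eqF // => k3.
have := le_lt_trans (le_trans k1 k2) k3.
by rewrite ltxx.
Qed.

End Aux.

Theorem proposition4p12 (R : realType) (A0 A : completeNormedModType R[i])
  (S : CQ_data A0 A) :
  is_CQstar_algebra S -> star_semisimple S ->
  forall (X : A) (alpha : R[i]), gen_eigenvalue S X alpha ->
  ~ has_gen_left_inverse S (X - alpha *: emb S (one0 S)).
Proof.
move=> HS _ X alpha [phi [[ses pos sym [g [g0 hg]]] _ [a [pa hz]]]] [Y HY].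
pose psi := fun U V => phi U V / g.
have Spsi : S_A0 S psi.
  split.
  - split => k U V W; rewrite /psi.
      by rewrite (proj1 ses) mulrDl mulrA.
    by rewrite (proj2 ses) mulrDl mulrA.
  - by move=> U; rewrite /psi divr_ge0 // ltW.
  - by move=> U c d; rewrite /psi sym.
  - exists 1; split; [exact: ltr01 | exact: lexx | ].
    move=> U V; rewrite /psi normrM normfV (gtr0_norm g0) mul1r ler_pdivrMr //.
    by rewrite [_ * g]mulrC mulrA; apply: hg.
have hZ : rmul S (X - alpha *: emb S (one0 S)) a = rmul S X a - alpha *: emb S a.
  by rewrite addrC -scaleNr rmul_shift // addrC scaleNr.
have hzero := @phi_zero _ _ _ _ HS _ _ _ ses g0 hg hz.
have := HY psi Spsi a a.
rewrite /psi hZ hzero mul0r => /esym/eqP.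
by rewrite mulf_eq0 invr_eq0 (gt_eqF pa) (gt_eqF g0).
Qed.
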